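(* Fix a positive integer $d$. Let $S^i$ be the quotient of $U^i$ by the two-sided ideal generated by $$\mathbf d_1+\cdots+\mathbf d_n-d,\qquad \prod_{k=0}^d(\mathbf h_i-k),\qquad \prod_{k=0}^d(\mathbf h_{\bar i}-k)\qquad(1\le i\le n),$$ and let $S$ be the quotient of $U(\mathfrak{gl}_n(\mathbb C)\oplus\mathfrak{gl}_n(\mathbb C))$ by the two-sided ideal generated by $$h_1+\cdots+h_n+h_{\bar1}+\cdots+h_{\bar n}-d,\qquad \prod_{k=0}^d(h_i-k),\qquad \prod_{k=0}^d(h_{\bar i}-k)\qquad(1\le i\le n).$$ Then $\rho$ induces an algebra isomorphism $S^i\cong S$.
   Context: Fix $n\ge1$. $\mathfrak g=\mathfrak{gl}_{2n}(\mathbb C)$ with $E_i=E_{i,i+1}$, $F_i=E_{i+1,i}$, $H_i=E_{i,i}$; $\theta(X)=JXJ^{-1}$ ($J$ antidiagonal permutation matrix); $U^i=U(\mathfrak g^\theta)$. Set $\mathbf e_i=E_i+F_{2n-i}$, $\mathbf f_i=F_i+E_{2n-i}$ ($1\le i\le n-1$), $\mathbf t=E_n+F_n$, $\mathbf d_i=H_i+H_{2n+1-i}$. $\rho:U^i\to U(\mathfrak{gl}_n\oplus\mathfrak{gl}_n)$ is the algebra isomorphism with $\rho(\mathbf e_i)=e_i+e_{\bar i}$, $\rho(\mathbf f_i)=f_i+f_{\bar i}$, $\rho(\mathbf d_i)=h_i+h_{\bar i}$, $\rho(\mathbf t)=h_n-h_{\bar n}$ ($e_i,f_i,h_i$ resp.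 $e_{\bar i},f_{\bar i},h_{\bar i}$ the Chevalley generators of the first resp. second copy of $\mathfrak{gl}_n$). Let $\mu_i$ be dual to $H_i$, $\alpha_i=\mu_i-\mu_{i+1}$; $X_{\alpha_i}=\mathbf e_i$ ($i\le n-1$), $X_{\alpha_n}=\mathbf t$, $X_{\alpha_i}=\mathbf f_{2n-i}$ ($n+1\le i\le 2n-1$), $X_{\mu_i-\mu_j}=[X_{\alpha_i},X_{\mu_{i+1}-\mu_j}]$ ($j\ge i+2$). Define $\mathbf t_n=\mathbf t$, $\mathbf t_{i-1}=\mathbf t_i+X_{\mu_{i-1}-\mu_{2n+2-i}}$ ($2\le i\le n$), and $\mathbf h_i=\tfrac12(\mathbf t_i+\mathbf d_i)$, $\mathbf h_{\bar i}=\tfrac12(-\mathbf t_i+\mathbf d_i)$ for $1\le i\le n$. *)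

(* Defs.v *)
From HB Require Import structures.
From mathcomp Require Import all_boot all_order all_algebra.
Set Implicit Arguments. Unset Strict Implicit. Unset Printing Implicit Defensive.
Import Order.TTheory GRing.Theory Num.Theory.
Local Open Scope ring_scope.

Definition lin_map (C : numClosedFieldType) (L B : lmodType C) (f : L -> B) : Prop :=
  forall (c : C) (x y : L), f (c *: x + y) = c *: f x + f y.

Definition alg_morph (C : numClosedFieldType) (A B : algType C) (g : A -> B) : Prop :=
  [/\ g 1 = 1, (forall a b, g (a * b) = g a * g b)
    & (forall (c : C) a b, g (c *: a + b) = c *: g a + g b)].

Definition lie_map (C : numClosedFieldType) (L : lmodType C) (P : L -> Prop)
  (br : L -> L -> L) (B : algType C) (f : L -> B) : Prop :=
  forall x y, P x -> P y -> f (br x y) = f x * f y - f y * f x.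

(* (A, iota) is a universal enveloping algebra of the Lie algebra
   g = {x : L | P x} with bracket br (iota only matters on P). *)
Definition is_UEA (C : numClosedFieldType) (L : lmodType C) (P : L -> Prop)
  (br : L -> L -> L) (A : algType C) (iota : L -> A) : Prop :=
  [/\ lin_map iota, lie_map P br iota &
    forall (B : algType C) (f : L -> B), lin_map f -> lie_map P br f ->
      (exists g : A -> B, alg_morph g /\ forall x, P x -> g (iota x) = f x) /\
      (forall g1 g2 : A -> B, alg_morph g1 -> alg_morph g2 ->
         (forall x, P x -> g1 (iota x) = g2 (iota x)) -> forall a, g1 a = g2 a)].

Definition in_ideal (A : nzRingType) (P : A -> Prop) (x : A) : Prop :=
  exists (m : nat) (a b c : 'I_m -> A),
    (forall k, P (c k)) /\ x = \sum_(k < m) a k * c k * b k.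

Section Mat.
Context (C : numClosedFieldType).

(* elementary matrix E_{i,j} of size m, with 1-based indices i j *)
Definition Em (m i j : nat) : 'M[C]_m :=
  \matrix_(a, b) ((((a : nat) == i.-1) && ((b : nat) == j.-1))%:R).

Definition mcomm (m : nat) (X Y : 'M[C]_m) : 'M[C]_m := X *m Y - Y *m X.

Definition pcomm (m : nat) (X Y : ('M[C]_m * 'M[C]_m)%type)
  : ('M[C]_m * 'M[C]_m)%type := (mcomm X.1 Y.1, mcomm X.2 Y.2).

Definition Jm (m : nat) : 'M[C]_m := \matrix_(a, b) (((a : nat) + b == m.-1)%N%:R).
Definition theta (m : nat) (X : 'M[C]_m) : 'M[C]_m := Jm m *m X *m invmx (Jm m).
Definition fixed_by_theta (m : nat) (X : 'M[C]_m) : Prop := theta X = X.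

Context (n : nat).
Local Notation N := (n.*2).

Definition bE (i : nat) : 'M[C]_N := Em N i i.+1.
Definition bF (i : nat) : 'M[C]_N := Em N i.+1 i.
Definition bH (i : nat) : 'M[C]_N := Em N i i.

Definition ee (i : nat) : 'M[C]_N := bE i + bF (N - i).
Definition ff (i : nat) : 'M[C]_N := bF i + bE (N - i).
Definition tt : 'M[C]_N := bE n + bF n.
Definition dd (i : nat) : 'M[C]_N := bH i + bH (N.+1 - i).

Definition Xa (i : nat) : 'M[C]_N :=
  if (i < n)%N then ee i else if i == n then tt else ff (N - i).

(* Xr i k = X_{mu_i - mu_{i+k+1}} *)
Fixpoint Xr (i k : nat) : 'M[C]_N :=
  match k with
  | 0 => Xa i
  | k'.+1 => mcomm (Xa i) (Xr i.+1 k')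
  end.

(* tpr m = t_{n-m} *)
Fixpoint tpr (m : nat) : 'M[C]_N :=
  match m with
  | 0 => tt
  | m'.+1 => tpr m' + Xr (n - m' - 1) (N + 2 - 2 * (n - m'))
  end.

Definition tb (i : nat) : 'M[C]_N := tpr (n - i).
Definition hb (i : nat) : 'M[C]_N := 2^-1 *: (tb i + dd i).
Definition hbb (i : nat) : 'M[C]_N := 2^-1 *: (- tb i + dd i).

Definition eL (i : nat) : ('M[C]_n * 'M[C]_n)%type := (Em n i i.+1, 0).
Definition eR (i : nat) : ('M[C]_n * 'M[C]_n)%type := (0, Em n i i.+1).
Definition fL (i : nat) : ('M[C]_n * 'M[C]_n)%type := (Em n i.+1 i, 0).
Definition fR (i : nat) : ('M[C]_n * 'M[C]_n)%type := (0, Em n i.+1 i).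
Definition hL (i : nat) : ('M[C]_n * 'M[C]_n)%type := (Em n i i, 0).
Definition hR (i : nat) : ('M[C]_n * 'M[C]_n)%type := (0, Em n i i).

End Mat.

Definition genSi (C : numClosedFieldType) (n d : nat) (Ui : algType C)
  (iota1 : 'M[C]_(n.*2) -> Ui) (y : Ui) : Prop :=
  y = \sum_(1 <= i < n.+1) iota1 (dd C n i) - d%:R \/
  exists2 i, (1 <= i <= n)%N &
    (y = \prod_(k < d.+1) (iota1 (hb C n i) - k%:R) \/
     y = \prod_(k < d.+1) (iota1 (hbb C n i) - k%:R)).

Definition genS (C : numClosedFieldType) (n d : nat) (U : algType C)
  (iota2 : ('M[C]_n * 'M[C]_n)%type -> U) (y : U) : Prop :=
  y = \sum_(1 <= i < n.+1) (iota2 (hL C n i) + iota2 (hR C n i)) - d%:R \/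
  exists2 i, (1 <= i <= n)%N &
    (y = \prod_(k < d.+1) (iota2 (hL C n i) - k%:R) \/
     y = \prod_(k < d.+1) (iota2 (hR C n i) - k%:R)).

(* Main.v *)
Require Import Defs.
From HB Require Import structures.
From mathcomp Require Import all_boot all_order all_algebra zify ring.
Import Order.TTheory GRing.Theory Num.Theory.
Local Open Scope ring_scope.

Lemma Em_mul (C : numClosedFieldType) m i j k l :
  (0 < j <= m)%N -> (0 < k <= m)%N ->
  Em C m i j *m Em C m k l = if j == k then Em C m i l else 0.
Proof.
move=> Hj Hk; have Hj' : (j.-1 < m)%N by lia.
apply/matrixP => a b; rewrite !mxE (bigD1 (Ordinal Hj')) //= big1; last first.
  move=> c Hc; rewrite !mxE.
  have -> : (c == j.-1 :> nat) = false.
    by apply/negbTE; apply: contra Hc => /eqP Hc; apply/eqP/val_inj.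
  by rewrite andbF mul0r.
rewrite addr0 !mxE eqxx andbT.
case: ifP => [/eqP <-|Hne]; first by rewrite mxE /= eqxx /= -natrM mulnb.
have -> : (j.-1 == k.-1) = false by apply/negbTE/eqP => E; move/eqP: Hne; lia.
by rewrite mxE /= mulr0.
Qed.

Lemma Jm_mull (C : numClosedFieldType) m (A : 'M[C]_m) a b :
  (Jm C m *m A) a b = A (rev_ord a) b.
Proof.
rewrite !mxE (bigD1 (rev_ord a)) //= big1 ?addr0.
  rewrite mxE /= (_ : (a + (m - a.+1) == m.-1)%N) ?mul1r //.
  by apply/eqP; have := ltn_ord a; lia.
move=> c Hc; rewrite mxE.
have -> : (a + c == m.-1)%N = false.
  apply/negbTE; apply: contra Hc => /eqP Hc; apply/eqP/val_inj => /=; have := ltn_ord a; lia.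
by rewrite mul0r.
Qed.

Lemma Jm_mulr (C : numClosedFieldType) m (A : 'M[C]_m) a b :
  (A *m Jm C m) a b = A a (rev_ord b).
Proof.
rewrite !mxE (bigD1 (rev_ord b)) //= big1 ?addr0.
  rewrite mxE /= (_ : ((m - b.+1) + b == m.-1)%N) ?mulr1 //.
  by apply/eqP; have := ltn_ord b; lia.
move=> c Hc; rewrite mxE.
have -> : (c + b == m.-1)%N = false.
  apply/negbTE; apply: contra Hc => /eqP Hc; apply/eqP/val_inj => /=; have := ltn_ord b; lia.
by rewrite mulr0.
Qed.

Lemma JJ (C : numClosedFieldType) m : Jm C m *m Jm C m = 1%:M.
Proof.
apply/matrixP => a b; rewrite Jm_mull !mxE /=.
have -> : ((m - a.+1 + b)%N == m.-1) = (a == b); last by []. apply/eqP/eqP => H.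
  apply/val_inj => /=; have := ltn_ord a; have := ltn_ord b; lia.
by subst; have := ltn_ord b; lia.
Qed.

Lemma invJ (C : numClosedFieldType) m : invmx (Jm C m) = Jm C m.
Proof.
have HJ : Jm C m \in unitmx by case: (mulmx1_unit (JJ C m)).
by rewrite -[RHS](mulKmx HJ) JJ mulmx1.
Qed.

Lemma theta_Em (C : numClosedFieldType) m i j : (0 < i <= m)%N -> (0 < j <= m)%N ->
  theta (Em C m i j) = Em C m (m.+1 - i) (m.+1 - j).
Proof.
move=> Hi Hj; rewrite /theta invJ; apply/matrixP => a b.
rewrite Jm_mulr Jm_mull !mxE /=.
have -> : (m - a.+1 == i.-1)%N = (a == (m.+1 - i).-1 :> nat) by apply/eqP/eqP; have := ltn_ord a; lia.
have -> : (m - b.+1 == j.-1)%N = (b == (m.+1 - j).-1 :> nat) by apply/eqP/eqP; have := ltn_ord b; lia.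
by [].
Qed.

Lemma theta_fix_pair (C : numClosedFieldType) m i j : (0 < i <= m)%N -> (0 < j <= m)%N ->
  fixed_by_theta (Em C m i j + Em C m (m.+1 - i) (m.+1 - j)).
Proof.
move=> Hi Hj; rewrite /fixed_by_theta /theta mulmxDr mulmxDl -!/(theta _) !theta_Em; try lia.
by rewrite addrC (_ : (m.+1 - (m.+1 - i) = i)%N) 1?(_ : (m.+1 - (m.+1 - j) = j)%N) //; lia.
Qed.

Lemma theta_fix_comm (C : numClosedFieldType) m (X Y : 'M[C]_m) :
  fixed_by_theta X -> fixed_by_theta Y -> fixed_by_theta (mcomm X Y).
Proof.
rewrite /fixed_by_theta /theta /mcomm invJ => HX HY.
rewrite mulmxBr mulmxBl.
have E : forall A B : 'M[C]_m, Jm C m *m A *m Jm C m *m (Jm C m *m B *m Jm C m) = Jm C m *m (A *m B) *m Jm C m.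
  by move=> A B; rewrite !mulmxA -[_ *m Jm C m *m Jm C m]mulmxA JJ mulmx1.
by rewrite -!E HX HY.
Qed.

Lemma mcomm_Em (C : numClosedFieldType) m i j k l :
  (0 < i <= m)%N -> (0 < j <= m)%N -> (0 < k <= m)%N -> (0 < l <= m)%N ->
  mcomm (Em C m i j) (Em C m k l) =
  (if j == k then Em C m i l else 0) - (if l == i then Em C m k j else 0).
Proof. by move=> *; rewrite /mcomm !Em_mul. Qed.

Definition Ya (C : numClosedFieldType) n i : ('M[C]_n * 'M[C]_n)%type :=
  if (i < n)%N then (Em C n i i.+1, Em C n i i.+1)
  else if i == n then (Em C n n n, - Em C n n n)
  else (Em C n (n.*2 - i).+1 (n.*2 - i), Em C n (n.*2 - i).+1 (n.*2 - i)).

Fixpoint Zr (C : numClosedFieldType) n i k : ('M[C]_n * 'M[C]_n)%type :=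
  match k with 0 => Ya C n i | k'.+1 => pcomm (Ya C n i) (Zr C n i.+1 k') end.

Ltac natb := first [ rewrite (_ : (_ == _) = true); [|by apply/eqP; lia]
                   | rewrite (_ : (_ == _) = false); [|by apply/negbTE/eqP; lia] ].

Lemma ZA (C : numClosedFieldType) n k : forall i, (n < i)%N -> (i + k < n.*2)%N ->
  Zr C n i k = (Em C n (n.*2 - i).+1 (n.*2 - i - k), Em C n (n.*2 - i).+1 (n.*2 - i - k)).
Proof.
elim: k => [|k IH] i H1 H2 /=.
  rewrite /Ya ifF; last by apply/negbTE; rewrite -leqNgt; lia.
  by rewrite ifF ?subn0 //; apply/negbTE/eqP; lia.
rewrite IH; try lia.
rewrite /Ya ifF; last by apply/negbTE; rewrite -leqNgt; lia.
rewrite ifF; last by apply/negbTE/eqP; lia.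
rewrite /pcomm /= mcomm_Em; try lia.
natb; natb; rewrite subr0.
by rewrite (_ : (n.*2 - i.+1 - k = n.*2 - i - k.+1)%N) //; lia.
Qed.

Lemma mcommNl (C : numClosedFieldType) m (A B : 'M[C]_m) : mcomm (- A) B = - mcomm A B.
Proof. by rewrite /mcomm mulNmx mulmxN opprK opprB addrC. Qed.
Lemma mcommNr (C : numClosedFieldType) m (A B : 'M[C]_m) : mcomm A (- B) = - mcomm A B.
Proof. by rewrite /mcomm mulNmx mulmxN opprK opprB addrC. Qed.

Lemma ZB (C : numClosedFieldType) n k : (0 < k < n)%N ->
  Zr C n n k = (Em C n n (n - k), - Em C n n (n - k)).
Proof.
case: k => [//|k] Hk /=.
rewrite ZA; try lia.
rewrite /Ya ltnn eqxx /pcomm /= mcommNl !mcomm_Em; try lia.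
rewrite (_ : (n.*2 - n.+1).+1 = n)%N; last by lia.
rewrite (_ : (n.*2 - n.+1 - k = n - k.+1))%N; last by lia.
by rewrite eqxx; natb; rewrite subr0.
Qed.

Lemma ZC (C : numClosedFieldType) n dd : forall i c, (i + dd = n)%N -> (0 < c < i)%N ->
  Zr C n i (n.*2 - c - i) = (Em C n i c, - Em C n i c).
Proof.
elim: dd => [|dd IH] i c H1 H2.
  rewrite addn0 in H1; subst i.
  rewrite ZB; last by lia.
  by rewrite (_ : (n - (n.*2 - c - n) = c)%N); last by lia.
rewrite (_ : (n.*2 - c - i = (n.*2 - c - i.+1).+1)%N); last by lia.
rewrite /= IH; try lia.
rewrite /Ya ifT; last by lia.
rewrite /pcomm /= mcommNr !mcomm_Em; try lia.
by rewrite eqxx; natb; rewrite subr0.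
Qed.

Lemma ZD (C : numClosedFieldType) n a : (0 < a < n)%N ->
  Zr C n a (n.*2 - a.*2) = (Em C n a a - Em C n a.+1 a.+1, - (Em C n a a - Em C n a.+1 a.+1)).
Proof.
move=> Ha.
rewrite (_ : (n.*2 - a.*2 = (n.*2 - a - a.+1).+1)%N); last by lia.
rewrite /= (@ZC C n (n - a.+1)); try lia.
rewrite /Ya ifT; last by lia.
rewrite /pcomm /= mcommNr !mcomm_Em; try lia.
by rewrite !eqxx.
Qed.

Lemma lin0 {C : numClosedFieldType} {L B : lmodType C} {f : L -> B} : lin_map f -> f 0 = 0.
Proof.
move=> H; have := H 1 0 0; rewrite !scale1r addr0 => E.
by apply: (addrI (f 0)); rewrite addr0 -E.
Qed.
Lemma linD {C : numClosedFieldType} {L B : lmodType C} {f : L -> B} : lin_map f ->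
  forall x y, f (x + y) = f x + f y.
Proof. by move=> H x y; have := H 1 x y; rewrite !scale1r. Qed.
Lemma linZ {C : numClosedFieldType} {L B : lmodType C} {f : L -> B} : lin_map f ->
  forall c x, f (c *: x) = c *: f x.
Proof. by move=> H c x; have := H c x 0; rewrite (lin0 H) !addr0. Qed.
Lemma linN {C : numClosedFieldType} {L B : lmodType C} {f : L -> B} : lin_map f ->
  forall x, f (- x) = - f x.
Proof. by move=> H x; rewrite -scaleN1r linZ // scaleN1r. Qed.
Lemma linB {C : numClosedFieldType} {L B : lmodType C} {f : L -> B} : lin_map f ->
  forall x y, f (x - y) = f x - f y.
Proof. by move=> H x y; rewrite linD // linN. Qed.

Lemma am_lin {C : numClosedFieldType} {A B : algType C} {g : A -> B} : alg_morph g -> lin_map g.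
Proof. by case. Qed.
Lemma amM {C : numClosedFieldType} {A B : algType C} {g : A -> B} : alg_morph g ->
  forall a b, g (a * b) = g a * g b.
Proof. by case. Qed.
Lemma am1 {C : numClosedFieldType} {A B : algType C} {g : A -> B} : alg_morph g -> g 1 = 1.
Proof. by case. Qed.
Lemma am_nat {C : numClosedFieldType} {A B : algType C} {g : A -> B} : alg_morph g ->
  forall k, g k%:R = k%:R.
Proof.
move=> H; elim=> [|k IH]; first by rewrite (lin0 (am_lin H)).
by rewrite !mulrS (linD (am_lin H)) am1 // IH.
Qed.
Lemma am_sum {C : numClosedFieldType} {A B : algType C} {g : A -> B} : alg_morph g ->
  forall m (F : 'I_m -> A), g (\sum_(k < m) F k) = \sum_(k < m) g (F k).
Proof.
move=> H m F; apply: (big_morph g (linD (am_lin H))); exact: (lin0 (am_lin H)).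
Qed.
Lemma am_prod {C : numClosedFieldType} {A B : algType C} {g : A -> B} : alg_morph g ->
  forall m (F : 'I_m -> A), g (\prod_(k < m) F k) = \prod_(k < m) g (F k).
Proof.
move=> H m F; apply: (big_morph g (amM H)); exact: (am1 H).
Qed.
Lemma am_sumnat {C : numClosedFieldType} {A B : algType C} {g : A -> B} : alg_morph g ->
  forall a b (F : nat -> A), g (\sum_(a <= k < b) F k) = \sum_(a <= k < b) g (F k).
Proof.
move=> H a b F; apply: (big_morph g (linD (am_lin H))); exact: (lin0 (am_lin H)).
Qed.

Lemma theta_fix_pair' (C : numClosedFieldType) m i j i' j' : (0 < i <= m)%N -> (0 < j <= m)%N ->
  i' = (m.+1 - i)%N -> j' = (m.+1 - j)%N -> fixed_by_theta (Em C m i j + Em C m i' j').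
Proof. by move=> ? ? -> ->; apply: theta_fix_pair. Qed.

Lemma pairD (C : numClosedFieldType) n (a b c d : 'M[C]_n) :
  ((a, b) + (c, d) = (a + c, b + d) :> ('M[C]_n * 'M[C]_n)%type).
Proof. by []. Qed.
Lemma pairN (C : numClosedFieldType) n (a b : 'M[C]_n) :
  (- (a, b) = (- a, - b) :> ('M[C]_n * 'M[C]_n)%type).
Proof. by []. Qed.
Lemma pairZ (C : numClosedFieldType) n (x : C) (a b : 'M[C]_n) :
  (x *: (a, b) = (x *: a, x *: b) :> ('M[C]_n * 'M[C]_n)%type).
Proof. by []. Qed.

Theorem proposition3 (C : numClosedFieldType) (n d : nat)
  (Hn : (0 < n)%N) (Hd : (0 < d)%N)
  (Ui : algType C) (iota1 : 'M[C]_(n.*2) -> Ui)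
  (HUi : is_UEA (@fixed_by_theta C n.*2) (@mcomm C n.*2) iota1)
  (U : algType C) (iota2 : ('M[C]_n * 'M[C]_n)%type -> U)
  (HU : is_UEA (fun _ => True) (@pcomm C n) iota2)
  (rho : Ui -> U) (Hrho : alg_morph rho) (Hbij : bijective rho)
  (Hre : forall i, (1 <= i <= n.-1)%N ->
     rho (iota1 (ee C n i)) = iota2 (eL C n i) + iota2 (eR C n i))
  (Hrf : forall i, (1 <= i <= n.-1)%N ->
     rho (iota1 (ff C n i)) = iota2 (fL C n i) + iota2 (fR C n i))
  (Hrd : forall i, (1 <= i <= n)%N ->
     rho (iota1 (dd C n i)) = iota2 (hL C n i) + iota2 (hR C n i))
  (Hrt : rho (iota1 (tt C n)) = iota2 (hL C n n) - iota2 (hR C n n)) :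
  forall x : Ui,
    in_ideal (genSi d iota1) x <-> in_ideal (genS d iota2) (rho x).
Proof.
have [lin1 lie1 _] := HUi; have [lin2 lie2 _] := HU.
have linr := am_lin Hrho.
have HXa : forall i, (0 < i < n.*2)%N ->
    fixed_by_theta (Xa C n i) /\ rho (iota1 (Xa C n i)) = iota2 (Ya C n i).
  move=> i Hi; rewrite /Xa /Ya; case: ltnP => H1; [|case: eqP => H2].
  - split; first by rewrite /ee /bE /bF; apply: theta_fix_pair'; lia.
    rewrite Hre; last by lia.
    by rewrite -(linD lin2) /eL /eR pairD addr0 add0r.
  - subst i; split; first by rewrite /tt /bE /bF; apply: theta_fix_pair'; lia.
    by rewrite Hrt -(linB lin2) /hL /hR pairN pairD oppr0 addr0 add0r.
  - split; first by rewrite /ff /bE /bF; apply: theta_fix_pair'; lia.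
    rewrite Hrf; last by lia.
    by rewrite -(linD lin2) /fL /fR pairD addr0 add0r.
have HXr : forall k i, (0 < i)%N -> (i + k < n.*2)%N ->
    fixed_by_theta (Xr C n i k) /\ rho (iota1 (Xr C n i k)) = iota2 (Zr C n i k).
  elim => [|k IH] i H1 H2 /=; first by apply: HXa; lia.
  have [F1 R1] := HXa i ltac:(lia).
  have [F2 R2] := IH i.+1 ltac:(lia) ltac:(lia).
  split; first exact: theta_fix_comm.
  by rewrite lie1 // (linB linr) !(amM Hrho) R1 R2 -lie2.
have Htpr : forall m, (m < n)%N ->
    rho (iota1 (tpr C n m)) = iota2 (Em C n (n - m) (n - m), - Em C n (n - m) (n - m)).
  elim => [|m IH] Hm /=.
    by have := (HXa n ltac:(lia)).2; rewrite /Xa /Ya ltnn eqxx subn0.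
  rewrite (linD lin1) (linD linr) IH; last by lia.
  have [_ R] := HXr (n.*2 + 2 - 2 * (n - m))%N (n - m - 1)%N ltac:(lia) ltac:(lia).
  rewrite R (_ : (n.*2 + 2 - 2 * (n - m) = n.*2 - (n - m - 1).*2)%N); last by lia.
  rewrite ZD; last by lia.
  rewrite -(linD lin2) pairD (_ : (n - m - 1).+1 = n - m)%N; last by lia.
  rewrite (_ : (n - m.+1 = n - m - 1)%N); last by lia.
  by rewrite addrC subrK -opprD addrC subrK.
have H2 : (2 : C) != 0 by rewrite pnatr_eq0.
have Hh : forall i, (0 < i <= n)%N ->
    rho (iota1 (hb C n i)) = iota2 (hL C n i) /\ rho (iota1 (hbb C n i)) = iota2 (hR C n i).
  move=> i Hi; rewrite /hb /hbb !(linZ lin1) !(linZ linr).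
  rewrite (linD lin1 (tb C n i)) (linD lin1 (- tb C n i)) (linN lin1) !(linD linr) (linN linr).
  rewrite /tb Htpr ?Hrd; try lia.
  rewrite (_ : (n - (n - i) = i)%N); last by lia.
  rewrite -!(linD lin2) -(linN lin2) -!(linD lin2) -!(linZ lin2) /hL /hR.
  rewrite pairN !pairD !pairZ !addr0 !add0r opprK addNr !scaler0.
  by rewrite -mulr2n -scaler_nat scalerA mulVf ?scale1r.
have E0 : rho (\sum_(1 <= i < n.+1) iota1 (dd C n i) - d%:R) =
    \sum_(1 <= i < n.+1) (iota2 (hL C n i) + iota2 (hR C n i)) - d%:R.
  rewrite (linB linr) (am_nat Hrho) am_sumnat //; congr (_ - _).
  by apply: eq_big_nat => i Hi; rewrite Hrd.
have E1 : forall i, (0 < i <= n)%N ->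
    rho (\prod_(k < d.+1) (iota1 (hb C n i) - k%:R)) = \prod_(k < d.+1) (iota2 (hL C n i) - k%:R).
  move=> i Hi; rewrite am_prod //; apply: eq_bigr => k _.
  by rewrite (linB linr) (am_nat Hrho) (Hh i Hi).1.
have E2 : forall i, (0 < i <= n)%N ->
    rho (\prod_(k < d.+1) (iota1 (hbb C n i) - k%:R)) = \prod_(k < d.+1) (iota2 (hR C n i) - k%:R).
  move=> i Hi; rewrite am_prod //; apply: eq_bigr => k _.
  by rewrite (linB linr) (am_nat Hrho) (Hh i Hi).2.
have Hgen : forall y, genSi d iota1 y -> genS d iota2 (rho y).
  move=> y [->|[i Hi [->|->]]]; first by left.
    by right; exists i => //; left; rewrite E1.
  by right; exists i => //; right; rewrite E2.
have Hgen' : forall y, genS d iota2 y -> exists y', genSi d iota1 y' /\ rho y' = y.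
  move=> y [->|[i Hi [->|->]]]; first by exists (\sum_(1 <= i < n.+1) iota1 (dd C n i) - d%:R); split => //; left.
    by exists (\prod_(k < d.+1) (iota1 (hb C n i) - k%:R)); split; [right; exists i => //; left|rewrite E1].
  by exists (\prod_(k < d.+1) (iota1 (hbb C n i) - k%:R)); split; [right; exists i => //; right|rewrite E2].
move=> x; split.
  case=> m [a [b [c [Hc ->]]]].
  exists m, (rho \o a), (rho \o b), (rho \o c); split; first by move=> k; apply: Hgen.
  by rewrite am_sum //; apply: eq_bigr => k _; rewrite !(amM Hrho).
case: Hbij => g Hg1 Hg2.
case=> m [a [b [c [Hc Hx]]]].
exists m, (g \o a), (g \o b), (g \o c); split.
  move=> k /=; have [y' [Hy' Ry']] := Hgen' _ (Hc k).
  by rewrite -Ry' Hg1.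
apply: (can_inj Hg1); rewrite Hx am_sum //; apply: eq_bigr => k _.
by rewrite !(amM Hrho) /= !Hg2.
Qed.
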